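(* Let $(X,\mathcal{T})$ be a finite topological space with furtherness function $\Psi$. The collection $\mathcal{B}^-=\{B^-(x,n)\mid x\in X,\ n\in\mathbb{N}\}$ of backward open balls $B^-(x,n)=\{y\in X\mid \Psi(y,x)<n\}$ is a basis for a topology on $X$, and this topology is the opposite topology $\mathcal{T}^{op}$, i.e. the topology on $X$ whose open sets are exactly the closed sets of $\mathcal{T}$.
   Context: Here $\mathbb{N}=\{1,2,3,\dots\}$. For a finite topological space $X$ and $x\in X$, $U_x$ denotes the minimal open set containing $x$. A nested sequence of open sets around $x$ is a finite sequence $U_0\subsetneq U_1\subsetneq\cdots\subsetneq U_m=X$ of open sets with $U_0=U_x$ such that for each $j$ there is no open set $V$ with $U_j\subsetneq V\subsetneq U_{j+1}$. The furtherness function $\Psi:X\times X\to\{0,1,\dots,|X|-1\}$ is defined by: $\Psi(x,y)$ is the smallest integer $k\ge 0$ such that there exists a nested sequence $(U_j)_{j\ge0}$ of open sets around $x$ with $y\in U_k$. *)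

(* Defs.v *)
From mathcomp Require Import all_boot.
From mathcomp Require Import boolp.
Set Implicit Arguments. Unset Strict Implicit. Unset Printing Implicit Defensive.

Section FiniteTop.
Variable T : finType.

(* Since T is finite, closure under binary unions/intersections is the
   same as closure under arbitrary unions / finite intersections. *)
Definition is_topology (O : {set {set T}}) : Prop :=
  [/\ set0 \in O, setT \in O,
      (forall U V, U \in O -> V \in O -> U :|: V \in O) &
      (forall U V, U \in O -> V \in O -> U :&: V \in O)].

Definition Umin (O : {set {set T}}) (x : T) : {set T} :=
  \bigcap_(U in O | x \in U) U.

Definition nested_seq (O : {set {set T}}) (x : T) (s : seq {set T}) : Prop :=
  [/\ 0 < size s,
      nth set0 s 0 = Umin O x,
      last set0 s = setT,
      (forall U, U \in s -> U \in O) &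
      (forall i, i.+1 < size s ->
         nth set0 s i \proper nth set0 s i.+1 /\
         (forall V, V \in O ->
            ~ (nth set0 s i \proper V /\ V \proper nth set0 s i.+1)))].

Definition furth_ok (O : {set {set T}}) (x y : T) (k : nat) : Prop :=
  exists s, nested_seq O x s /\ k < size s /\ y \in nth set0 s k.

(* The furtherness function Psi(x,y): least such k (0 by default if none
   exists, which never happens for a topology). *)
Definition Psi (O : {set {set T}}) (x y : T) : nat :=
  match pselect (exists k, furth_ok O x y k) with
  | left H => @ex_minn (fun k => `[< furth_ok O x y k >])
                (let: ex_intro k Hk := H in ex_intro _ k (asboolT Hk))
  | right _ => 0
  end.

Definition bball (O : {set {set T}}) (x : T) (n : nat) : {set T} :=
  [set y | Psi O y x < n].

Definition in_Bminus (O : {set {set T}}) (A : {set T}) : Prop :=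
  exists x n, 0 < n /\ A = bball O x n.

Definition is_basis (B : {set T} -> Prop) : Prop :=
  (forall z : T, exists A, B A /\ z \in A) /\
  (forall A1 A2 z, B A1 -> B A2 -> z \in A1 :&: A2 ->
     exists A3, [/\ B A3, z \in A3 & A3 \subset A1 :&: A2]).

Definition generated_open (B : {set T} -> Prop) (A : {set T}) : Prop :=
  forall z, z \in A -> exists A', [/\ B A', z \in A' & A' \subset A].

Definition op_open (O : {set {set T}}) (A : {set T}) : Prop :=
  ~: A \in O.

End FiniteTop.

(* Main.v *)
Require Import Defs.
From mathcomp Require Import all_boot.
From mathcomp Require Import boolp.
Set Implicit Arguments. Unset Strict Implicit. Unset Printing Implicit Defensive.

Definition covb (T : finType) (O : {set {set T}}) (a b : {set T}) : bool :=
  (a \proper b) && [forall V, (V \in O) ==> ~~((a \proper V) && (V \proper b))].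

Lemma Umin_open (T : finType) (O : {set {set T}}) x :
  is_topology O -> Umin O x \in O.
Proof.
case=> _ OT _ OI; rewrite /Umin; apply: (big_ind (fun U => U \in O)) => //.
by move=> i /andP[].
Qed.

Lemma Umin_mem (T : finType) (O : {set {set T}}) x : x \in Umin O x.
Proof. by apply/bigcapP => U /andP[]. Qed.

Lemma Umin_sub (T : finType) (O : {set {set T}}) x U :
  U \in O -> x \in U -> Umin O x \subset U.
Proof. by move=> h1 h2; apply: bigcap_inf; rewrite /= h1 h2. Qed.

Lemma Umin_trans (T : finType) (O : {set {set T}}) y z :
  is_topology O -> y \in Umin O z -> Umin O y \subset Umin O z.
Proof. by move=> HO; apply: Umin_sub; apply: Umin_open. Qed.

Lemma covb_join (T : finType) (O : {set {set T}}) c a b :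
  is_topology O -> c \in O -> a \in O -> b \in O -> covb O a b ->
  (c :|: a == c :|: b) || covb O (c :|: a) (c :|: b).
Proof.
case=> _ _ OU OI cO aO bO /andP[pab /forallP Hc].
case: eqP => //= Hne.
have sab : a \subset b by exact: proper_sub.
apply/andP; split.
  by rewrite properEneq setUS // andbT; apply/eqP.
apply/forallP => V; apply/implyP => VO; apply/negP => /andP[p1 p2].
move: p1 p2; rewrite !properE => /andP[s1 n1] /andP[s2 n2].
have := Hc (V :&: b); rewrite OI //= properE properE.
apply/negP; apply/negPn; apply/andP; split; apply/andP; split.
- rewrite subsetI sab andbT; apply: subset_trans s1; exact: subsetUr.
- apply/negP => h; move/negP: n1; apply; apply/subsetP => v vV.
  have : v \in c :|: b by exact: (subsetP s2).
  rewrite !inE; case/orP=> [->//|vb]; apply/orP; right.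
  by apply: (subsetP h); rewrite inE vV vb.
- exact: subsetIr.
- apply/negP => h; move/negP: n2; apply; apply/subsetP => v.
  rewrite inE; case/orP => [vc|vb].
    by apply: (subsetP s1); rewrite inE vc.
  by have := subsetP h v vb; rewrite inE => /andP[].
Qed.

Lemma join_chain (T : finType) (O : {set {set T}}) c a t :
  is_topology O -> c \in O -> a \in O -> all (fun U => U \in O) t ->
  path (covb O) a t ->
  exists t', [/\ path (covb O) (c :|: a) t', all (fun U => U \in O) t',
   last (c :|: a) t' = c :|: last a t &
   forall k, k <= size t -> exists j, [/\ j <= k, j <= size t' &
       nth set0 ((c :|: a) :: t') j = c :|: nth set0 (a :: t) k]].
Proof.
move=> HO cO; elim: t a => [|b t IH] a aO /= tO pth.
  exists [::]; split=> //= k; rewrite leqn0 => /eqP->; by exists 0.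
case/andP: tO => bO tO; case/andP: pth => cab pth.
have [t0 [p0 a0 l0 n0]] := IH b bO tO pth.
have := covb_join HO cO aO bO cab; case/orP => [/eqP E | C].
  exists t0; rewrite E; split=> //; case=> [|k] hk; first by exists 0.
  have [j [h1 h2 h3]] := n0 k hk; exists j; split=> //; exact: leqW.
exists (c :|: b :: t0); split => /=.
- by rewrite C p0.
- by case: HO => _ _ OU _; rewrite OU // a0.
- done.
case=> [|k] hk; first by exists 0.
have [j [h1 h2 h3]] := n0 k hk; by exists j.+1.
Qed.

Lemma nested_of (T : finType) (O : {set {set T}}) x a t :
  nested_seq O x (a :: t) ->
  [/\ a = Umin O x, a \in O, all (fun U => U \in O) t, path (covb O) a t
     & last a t = setT].
Proof.
case=> _ /= H0 Hl Ho Hc; split=> //.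
- by apply: Ho; rewrite inE eqxx.
- by apply/allP => U Ut; apply: Ho; rewrite inE Ut orbT.
apply/(pathP set0) => i hi.
have [p nc] := Hc i hi.
rewrite /covb p /=; apply/forallP => V; apply/implyP => VO.
by apply/negP => /andP[h1 h2]; exact: (nc V VO (conj h1 h2)).
Qed.

Lemma nested_to (T : finType) (O : {set {set T}}) x t :
  is_topology O -> all (fun U => U \in O) t -> path (covb O) (Umin O x) t ->
  last (Umin O x) t = setT -> nested_seq O x (Umin O x :: t).
Proof.
move=> HO tO pth Hl; split => //.
- move=> U; rewrite inE => /orP[/eqP->|]; first exact: Umin_open.
  by move: U; apply/allP.
move=> i hi; move/(pathP set0): pth => /(_ i hi) /andP[p /forallP nc].
split=> // V VO [h1 h2]; have := nc V; by rewrite VO h1 h2.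
Qed.

Lemma chain_exists (T : finType) (O : {set {set T}}) U :
  is_topology O -> U \in O ->
  exists t, [/\ all (fun U => U \in O) t, path (covb O) U t & last U t = setT].
Proof.
move=> HO; move: U; have [_ OT _ _] := HO.
suff: forall n U, #|~: U| <= n -> U \in O ->
  exists t, [/\ all (fun U => U \in O) t, path (covb O) U t & last U t = setT].
  by move=> H U; apply: H.
elim=> [|n IH] U hn UO.
  exists [::]; split=> //=.
  by move: hn; rewrite leqn0 cards_eq0 => /eqP h; rewrite -(setCK U) h setC0.
have [EU|NU] := eqVneq U setT; first by exists [::]; rewrite EU.
have PT : (setT \in O) && (U \proper setT) by rewrite OT properEneq NU subsetT.
case: (@arg_minnP _ setT (fun V : {set T} => (V \in O) && (U \proper V)) (fun V : {set T} => #|V|) PT) => V /andP[VO UV] Vmin.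
have lt : #|~: V| < #|~: U|.
  apply: proper_card; rewrite properE !setCS; by move: UV; rewrite properE.
have [t [t1 t2 t3]] := IH V (leq_trans lt hn) VO.
exists (V :: t); split => /=; rewrite ?VO ?t1 ?t2 ?t3 //= andbT.
rewrite /covb UV /=; apply/forallP => W; apply/implyP => WO.
apply/negP => /andP[h1 h2].
have := Vmin W; rewrite WO h1 => /(_ isT); rewrite leqNgt.
by rewrite proper_card.
Qed.

Lemma Psi_spec (T : finType) (O : {set {set T}}) x y :
  is_topology O ->
  furth_ok O x y (Psi O x y) /\ forall k, furth_ok O x y k -> Psi O x y <= k.
Proof.
move=> HO.
have Hex : exists k, furth_ok O x y k.
  have [t [t1 t2 t3]] := chain_exists HO (Umin_open x HO).
  exists (size t); exists (Umin O x :: t); split; first exact: nested_to.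
  split=> //.
  rewrite -[size t]/((size (Umin O x :: t)).-1) nth_last /= t3 inE //.
rewrite /Psi; case: pselect => [H|/(_ Hex)//].
case: ex_minnP => m /asboolP Hm Hmin; split=> // k Hk; apply: Hmin.
exact/asboolP.
Qed.

Lemma ball_closed (T : finType) (O : {set {set T}}) x n y z :
  is_topology O -> y \in Umin O z -> Psi O y x < n -> Psi O z x < n.
Proof.
move=> HO yz lt.
have [[s [ns [ks xs]]] _] := Psi_spec y x HO.
case: s ns ks xs => [|a t] ns ks xs; first by case: ns.
case/nested_of: (ns) => Ea aO tO pth lst; subst a.
have [t' [p' o' l' n']] := join_chain HO (Umin_open z HO) aO tO pth.
have Ezy : Umin O z :|: Umin O y = Umin O z.
  by apply/setUidPl; exact: Umin_trans.
rewrite Ezy in p' l' n'.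
have [j [j1 j2 j3]] := n' (Psi O y x) ks.
have : furth_ok O z x j.
  exists (Umin O z :: t'); split.
    by apply: nested_to; rewrite // l' lst setUT.
  by split; [rewrite ltnS | rewrite j3 inE xs orbT].
have [_ Hm] := Psi_spec z x HO.
move/Hm => h; exact: leq_ltn_trans h (leq_ltn_trans j1 lt).
Qed.

Lemma Psi0 (T : finType) (O : {set {set T}}) y x :
  is_topology O -> Psi O y x = 0 -> x \in Umin O y.
Proof.
move=> HO H; have [[s [ns [ks xs]]] _] := Psi_spec y x HO.
rewrite H in xs; case: s ns ks xs => [|a t] ns ks xs; first by case: ns.
by case/nested_of: ns => Ea _ _ _ _; rewrite -Ea.
Qed.

Lemma Psi_refl (T : finType) (O : {set {set T}}) x :
  is_topology O -> Psi O x x = 0.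
Proof.
move=> HO; have [_ H] := Psi_spec x x HO.
apply/eqP; rewrite -leqn0; apply: H.
have [t [t1 t2 t3]] := chain_exists HO (Umin_open x HO).
exists (Umin O x :: t); split; first exact: nested_to.
by split=> //; exact: Umin_mem.
Qed.

Theorem mainTheorem12 (T : finType) (O : {set {set T}}) :
  is_topology O ->
  is_basis (in_Bminus O) /\
  (forall A : {set T}, generated_open (in_Bminus O) A <-> op_open O A).
Proof.
move=> HO.
have zin : forall z, z \in bball O z 1 by move=> z; rewrite inE Psi_refl.
have B1 : forall z, in_Bminus O (bball O z 1) by move=> z; exists z, 1.
have sub : forall z x n, z \in bball O x n -> bball O z 1 \subset bball O x n.
  move=> z x n; rewrite !inE => hz; apply/subsetP => y; rewrite inE ltnS leqn0.
  move/eqP/(Psi0 HO) => zy; rewrite inE; exact: ball_closed HO zy hz.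
split.
  split; first by move=> z; exists (bball O z 1).
  move=> A1 A2 z [x1 [n1 [_ ->]]] [x2 [n2 [_ ->]]]; rewrite inE => /andP[h1 h2].
  exists (bball O z 1); split=> //; rewrite subsetI !sub //.
move=> A; split.
  move=> HA; rewrite /op_open.
  have -> : ~: A = \bigcup_(w in ~: A) Umin O w.
    apply/setP => v; apply/idP/idP.
      by move=> vA; apply/bigcupP; exists v => //; exact: Umin_mem.
    case/bigcupP => w wA vw; rewrite inE; apply/negP => vA.
    have [B [[x [n [_ EB]]] vB BA]] := HA v vA.
    move: wA; rewrite inE => /negP; apply; apply: (subsetP BA).
    by move: vB; rewrite EB !inE => h; exact: ball_closed HO vw h.
  have [O0 _ OU _] := HO; apply: (big_ind (fun U => U \in O)) => //.
  by move=> w _; exact: Umin_open.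
move=> HA z zA; exists (bball O z 1); split=> //.
apply/subsetP => y; rewrite inE ltnS leqn0 => /eqP/(Psi0 HO) zy.
apply/negPn/negP => yA.
have : Umin O y \subset ~: A by apply: Umin_sub => //; rewrite inE.
by move/subsetP/(_ z zy); rewrite inE zA.
Qed.
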